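(* Let $\mathcal{I}=(\mathcal{P},\mathcal{L})$ be a cyclic symmetric $(v,k)$-configuration with cyclic permutation $\sigma$. Fix a point $P_0$ and a block $\ell_0$, and put $P_i=\sigma^i(P_0)$, $\ell_i=\sigma^i(\ell_0)$ (indices modulo $v$). Let $d$ be a positive divisor of $v$, $t=v/d$, $O_i=\{P_u:u\equiv i\pmod t\}$, $L_i=\{\ell_u:u\equiv i\pmod t\}$ for $i=0,\dots,t-1$, and $w_u=|\ell_0\cap O_u|$. Let $V$ be the $v\times v$ incidence matrix of $\mathcal{I}$ whose rows are ordered as $\ell_0,\ell_t,\dots,\ell_{(d-1)t},\ell_1,\ell_{1+t},\dots,\ell_{t-1+(d-1)t}$ (i.e. $L_0$, then $L_1$, etc., each listed as $\ell_i,\ell_{i+t},\dots,\ell_{i+(d-1)t}$) and whose columns are ordered analogously as $P_0,P_t,\dots$ ($O_0$, then $O_1$, etc.). Then $V$ (which contains no $2\times2$ all-ones submatrix) is $d$-block circulant: writing $V=(C_{i,j})_{0\le i,j\le t-1}$ as a $t\times t$ block matrix of $d\times d$ blocks, each $C_{i,j}$ is a binary circulant $d\times d$ matrix with no $2\times 2$ all-ones submatrix and of weight $w_{j-i \bmod t}$. In particular the weight matrix $W(V)$ is the circulant $t\times t$ matrix whose $(i,j)$ entry is $w_{j-i\bmod t}$ (first row $w_0,w_1,\dots,w_{t-1}$, each subsequent row the cyclic right shift of the previous one).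
   Context: A symmetric $(v,k)$-configuration is a pair $(\mathcal{P},\mathcal{L})$ with $|\mathcal{P}|=|\mathcal{L}|=v$, blocks being subsets of $\mathcal{P}$, each block containing $k$ points, each point in $k$ blocks, any two points in at most one common block; it is cyclic if there is a permutation $\sigma$ of $\mathcal{P}$ mapping blocks to blocks with $\langle\sigma\rangle$ acting regularly on points and on blocks. The incidence matrix has rows indexed by blocks, columns by points, entry $1$ iff the point lies on the block. A square matrix is circulant if each row is obtained from the previous one by a cyclic shift one position to the right; its weight is the number of ones in each row. An $i\times j$ binary matrix is $d$-block circulant if it is partitioned into $d\times d$ blocks each of which is circulant; its weight matrix is the $(i/d)\times(j/d)$ matrix whose entries are the weights of these blocks. *)

(* Defs.v *)
From HB Require Import structures.
From mathcomp Require Import all_boot all_order all_algebra all_fingroup.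
Set Implicit Arguments. Unset Strict Implicit. Unset Printing Implicit Defensive.

Definition sym_config (T : finType) (L : {set {set T}}) (v k : nat) : Prop :=
  [/\ #|T| = v, #|L| = v,
      (forall B, B \in L -> #|B| = k),
      (forall x : T, #|[set B in L | x \in B]| = k) &
      (forall x y : T, x != y -> #|[set B in L | (x \in B) && (y \in B)]| <= 1)].

Definition cyclic_perm (T : finType) (L : {set {set T}}) (sigma : {perm T}) : Prop :=
  [/\ (forall B, B \in L -> sigma @: B \in L),
      (forall x y : T, exists! g : {perm T}, g \in <[sigma]>%g /\ g x = y) &
      (forall B C, B \in L -> C \in L ->
         exists! g : {perm T}, g \in <[sigma]>%g /\ g @: B = C)].

Definition pt (T : finType) (sigma : {perm T}) (P0 : T) (i : nat) : T :=
  (sigma ^+ i)%g P0.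
Definition blk (T : finType) (sigma : {perm T}) (l0 : {set T}) (i : nat) : {set T} :=
  (sigma ^+ i)%g @: l0.

Definition orbitO (T : finType) (sigma : {perm T}) (P0 : T) (v t i : nat) : {set T} :=
  [set pt sigma P0 u | u : 'I_v & u %% t == i %% t].

Definition wt (T : finType) (sigma : {perm T}) (P0 : T) (l0 : {set T}) (v t u : nat) : nat :=
  #|l0 :&: orbitO sigma P0 v t u|.

(* The incidence matrix with rows ordered l_0,l_t,..,l_{(d-1)t},l_1,... and
   columns P_0,P_t,..,P_{(d-1)t},P_1,...: row r = i*d + a (i<t, a<d) is the
   block l_{i+a t}, column c = j*d + b is the point P_{j + b t}. *)
Definition ordered_incidence (T : finType) (sigma : {perm T}) (P0 : T)
    (l0 : {set T}) (t d : nat) : 'M[bool]_(t * d) :=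
  \matrix_(r < t * d, c < t * d)
    (pt sigma P0 (c %/ d + (c %% d) * t) \in blk sigma l0 (r %/ d + (r %% d) * t)).

Definition is_circulant (n : nat) (C : 'M[bool]_n) : Prop :=
  forall i j : 'I_n, i.+1 < n -> C (ordS i) (ordS j) = C i j.

Definition row_weight (n : nat) (C : 'M[bool]_n) (w : nat) : Prop :=
  forall i : 'I_n, #|[set j | C i j]| = w.

Definition no_2x2_ones (m n : nat) (M : 'M[bool]_(m, n)) : Prop :=
  ~ exists (r1 r2 : 'I_m) (c1 c2 : 'I_n),
      [/\ r1 != r2, c1 != c2, M r1 c1 && M r1 c2 & M r2 c1 && M r2 c2].

Lemma blk_idx_proof (t d : nat) (i : 'I_t) (a : 'I_d) : i * d + a < t * d.
Proof.
case: i a => i Hi [a Ha] /=.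
apply: (@leq_trans (i * d + d)); first by rewrite ltn_add2l.
by rewrite -mulSnr leq_mul2r Hi orbT.
Qed.

Definition blk_idx (t d : nat) (i : 'I_t) (a : 'I_d) : 'I_(t * d) :=
  Ordinal (blk_idx_proof i a).

Definition block_of (t d : nat) (V : 'M[bool]_(t * d)) (i j : 'I_t) : 'M[bool]_d :=
  \matrix_(a < d, b < d) V (blk_idx i a) (blk_idx j b).

Definition block_circulant (t d : nat) (V : 'M[bool]_(t * d)) : Prop :=
  forall i j : 'I_t, is_circulant (block_of V i j).

(* weight matrix: entry (i,j) = weight of block C_{ij}, i.e. its number of
   ones divided by d (= the common row weight for a circulant block) *)
Definition weight_mx (t d : nat) (V : 'M[bool]_(t * d)) : 'M[nat]_t :=
  \matrix_(i < t, j < t)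
    (#|[set ab : 'I_d * 'I_d | block_of V i j ab.1 ab.2]| %/ d).

Definition circ_mx (t : nat) (f : nat -> nat) : 'M[nat]_t :=
  \matrix_(i < t, j < t) f ((j + t - i) %% t).

(* Main.v *)
Require Import Defs.
From HB Require Import structures.
From mathcomp Require Import all_boot all_order all_algebra all_fingroup.
From mathcomp Require Import cyclic zify.
Set Implicit Arguments. Unset Strict Implicit. Unset Printing Implicit Defensive.

Definition regular_pts (T : finType) (sigma : {perm T}) :=
  forall x y : T, exists! g : {perm T}, g \in <[sigma]>%g /\ g x = y.

Lemma order_reg (T : finType) (sigma : {perm T}) (P0 : T) :
  regular_pts sigma -> #[sigma]%g = #|T|.
Proof.
move=> hr; rewrite orderE.
have hinj : {in <[sigma]>%g &, injective (fun g : {perm T} => g P0)}.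
  move=> g h hg hh /= e.
  have [g0 [_ u]] := hr P0 (g P0).
  by rewrite -(u g) ?(u h).
rewrite -(card_in_imset hinj) -cardsT.
suff -> : [set (fun g : {perm T} => g P0) g | g in <[sigma]>%g] = [set: T] by [].
apply/setP=> y; rewrite inE; apply/imsetP.
have [g [[hg hy] _]] := hr P0 y.
by exists g.
Qed.

Lemma pt_mod (T : finType) (sigma : {perm T}) P0 x :
  pt sigma P0 x = pt sigma P0 (x %% #[sigma]%g).
Proof. by rewrite /pt expg_mod_order. Qed.

Lemma pt_eq (T : finType) (sigma : {perm T}) P0 x y :
  regular_pts sigma -> pt sigma P0 x = pt sigma P0 y -> x = y %[mod #[sigma]%g].
Proof.
move=> hr e; apply/eqP; rewrite -eq_expg_mod_order; apply/eqP.
have [g0 [_ u]] := hr P0 (pt sigma P0 x).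
rewrite -(u (sigma ^+ x)%g) ?(u (sigma ^+ y)%g) //; split => //; exact: mem_cycle.
Qed.

Lemma ptD (T : finType) (sigma : {perm T}) P0 x s :
  pt sigma P0 (x + s) = (sigma ^+ s)%g (pt sigma P0 x).
Proof. by rewrite /pt expgD permM. Qed.

Lemma blkD (T : finType) (sigma : {perm T}) l0 y s :
  blk sigma l0 (y + s) = (sigma ^+ s)%g @: blk sigma l0 y.
Proof.
rewrite /blk -imset_comp; apply: eq_imset => z /=.
by rewrite expgD permM.
Qed.

Lemma mem_shift (T : finType) (sigma : {perm T}) P0 l0 x y s :
  (pt sigma P0 x \in blk sigma l0 y) = (pt sigma P0 (x + s) \in blk sigma l0 (y + s)).
Proof. by rewrite ptD blkD mem_imset //; apply: perm_inj. Qed.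

Lemma congD d x x' y y' : x = x' %[mod d] -> y = y' %[mod d] -> x + y = x' + y' %[mod d].
Proof. by move=> hx hy; rewrite -modnDm hx hy modnDm. Qed.

Lemma mem_congr (T : finType) (sigma : {perm T}) P0 l0 x y x' y' :
  x + y' = x' + y %[mod #[sigma]%g] ->
  (pt sigma P0 x \in blk sigma l0 y) = (pt sigma P0 x' \in blk sigma l0 y').
Proof.
move=> e; rewrite (@mem_shift _ sigma P0 l0 x y y') (@mem_shift _ sigma P0 l0 x' y' y).
rewrite (@pt_mod _ sigma P0 (x + y')) e -pt_mod (addnC y y'). by [].
Qed.

Lemma blk_in (T : finType) (L : {set {set T}}) (sigma : {perm T}) l0 y :
  (forall B, B \in L -> sigma @: B \in L) -> l0 \in L -> blk sigma l0 y \in L.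
Proof.
move=> hL hl; elim: y => [|y IH].
  rewrite /blk expg0 (eq_imset _ (@perm1 _)) imset_id //.
by rewrite -addn1 blkD expg1; apply: hL.
Qed.

Lemma blk_eq (T : finType) (L : {set {set T}}) (sigma : {perm T}) l0 x y :
  cyclic_perm L sigma -> l0 \in L ->
  blk sigma l0 x = blk sigma l0 y -> x = y %[mod #[sigma]%g].
Proof.
case=> hL _ hu hl e; apply/eqP; rewrite -eq_expg_mod_order; apply/eqP.
have [g0 [_ u]] := hu l0 (blk sigma l0 x) hl (blk_in x hL hl).
rewrite -(u (sigma ^+ x)%g) ?(u (sigma ^+ y)%g) //; split => //; exact: mem_cycle.
Qed.

Lemma blk0 (T : finType) (sigma : {perm T}) l0 : blk sigma l0 0 = l0.
Proof. by rewrite /blk expg0 (eq_imset _ (@perm1 _)) imset_id. Qed.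

Lemma entryE (T : finType) (sigma : {perm T}) P0 l0 t d (i j : 'I_t) (a b : 'I_d) :
  block_of (ordered_incidence sigma P0 l0 t d) i j a b =
  (pt sigma P0 (j + b * t) \in blk sigma l0 (i + a * t)).
Proof.
have hd : 0 < d := leq_ltn_trans (leq0n a) (ltn_ord a).
rewrite /block_of !mxE /=.
rewrite !divnMDl // !modnMDl !divn_small // !modn_small // !addn0. by [].
Qed.

Lemma rexp_lt t d (r : 'I_(t * d)) : r %/ d + (r %% d) * t < t * d.
Proof.
have : 0 < t * d := leq_ltn_trans (leq0n r) (ltn_ord r).
rewrite muln_gt0 => /andP [ht hd].
have h1 : r %/ d < t by rewrite ltn_divLR.
have h2 : r %% d < d by rewrite ltn_pmod.
nia.
Qed.

Lemma rexp_inj t d (r r' : 'I_(t * d)) :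
  r %/ d + (r %% d) * t = r' %/ d + (r' %% d) * t %[mod t * d] -> r = r'.
Proof.
have : 0 < t * d := leq_ltn_trans (leq0n r) (ltn_ord r).
rewrite muln_gt0 => /andP [ht hd].
rewrite (modn_small (rexp_lt r)) (modn_small (rexp_lt r')) => e.
have h1 : r %/ d < t by rewrite ltn_divLR.
have h1' : r' %/ d < t by rewrite ltn_divLR.
have e1 := congr1 (modn^~ t) e; rewrite /= !(addnC (_ %/ d)) !modnMDl (modn_small h1) (modn_small h1') in e1.
rewrite e1 in e; move/addnI/eqP: e; rewrite eqn_pmul2r // => /eqP e2.
apply: val_inj; rewrite /= (divn_eq r d) (divn_eq r' d) e1 e2 //.
Qed.

Lemma card_as_sum (I : finType) (P : pred I) : #|[set x | P x]| = \sum_x (P x : nat).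
Proof.
rewrite -sum1_card big_mkcond /=; apply: eq_bigr => x _; rewrite inE; by case: (P x).
Qed.

Lemma count_rot d t c K (g : nat -> bool) : 0 < d ->
  (forall m, g m = g (m %% (t * d))) ->
  #|[set b : 'I_d | g (c + (b + K) * t)]| = #|[set b : 'I_d | g (c + b * t)]|.
Proof.
move=> hd hg.
pose h (b : 'I_d) : 'I_d := Ordinal (ltn_pmod (b + K) hd).
have hinj : injective h.
  move=> b b' /(congr1 val) /= /eqP; rewrite eqn_modDr !modn_small // => /eqP e.
  exact: val_inj.
transitivity #|h @^-1: [set b : 'I_d | g (c + b * t)]|; last exact: card_preimset.
apply: eq_card => b; rewrite !inE /=.
rewrite [LHS]hg [RHS]hg (mulnC t d) muln_modl modnDmr //.
Qed.

Lemma idx2_proof t d c (b : 'I_d) : c < t -> c + b * t < t * d.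
Proof. case: b => b hb /= hc; nia. Qed.

Lemma count_orbit (T : finType) (sigma : {perm T}) (P0 : T) (l0 : {set T}) t d c (hc : c < t) :
  regular_pts sigma -> #[sigma]%g = t * d ->
  #|[set b : 'I_d | pt sigma P0 (c + b * t) \in l0]| =
  #|[set u : 'I_(t * d) | (u %% t == c) && (pt sigma P0 u \in l0)]|.
Proof.
move=> hr ho.
have ht : 0 < t := leq_ltn_trans (leq0n c) hc.
pose f (b : 'I_d) : 'I_(t * d) := Ordinal (idx2_proof b hc).
have finj : injective f.
  move=> b b' /(congr1 val) /= /addnI/eqP; rewrite eqn_pmul2r // => /eqP e.
  exact: val_inj.
rewrite -(card_imset _ finj); apply: eq_card => u; rewrite !inE.
apply/imsetP/andP.
  case=> b; rewrite inE => hb ->; split => //.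
  by rewrite /= addnC modnMDl modn_small.
case=> /eqP hu hin.
have hlt : u %/ t < d by rewrite ltn_divLR // [d * t]mulnC.
exists (Ordinal hlt); last first.
  by apply: val_inj; rewrite /= {1}(divn_eq u t) hu addnC.
by rewrite inE /= -hu addnC -divn_eq.
Qed.

Lemma orbit_count (T : finType) (sigma : {perm T}) (P0 : T) (l0 : {set T}) t d c :
  regular_pts sigma -> #[sigma]%g = t * d ->
  #|l0 :&: orbitO sigma P0 (t * d) t c| =
  #|[set u : 'I_(t * d) | (u %% t == c %% t) && (pt sigma P0 u \in l0)]|.
Proof.
move=> hr ho.
have finj : injective (fun u : 'I_(t * d) => pt sigma P0 u).
  move=> u u' /(pt_eq hr); rewrite ho !modn_small // => e; exact: val_inj.
rewrite -(card_imset _ finj); apply: eq_card => x; rewrite !inE /orbitO.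
apply/andP/imsetP.
  case=> hx /imsetP [u hu e]; subst x; exists u => //; rewrite inE; rewrite inE in hu.
  by rewrite hu hx.
case=> u; rewrite inE => /andP [hu hin] ->; split => //.
by apply/imsetP; exists u; rewrite // inE.
Qed.

Lemma main_lemma (T : finType) (L : {set {set T}}) (v k : nat)
    (sigma : {perm T}) (P0 : T) (l0 : {set T}) (t d : nat) :
  sym_config L v k ->
  cyclic_perm L sigma ->
  l0 \in L ->
  0 < d -> v = t * d ->
  let V := ordered_incidence sigma P0 l0 t d in
  let w := wt sigma P0 l0 v t in
  [/\ no_2x2_ones V,
      block_circulant V,
      (forall i j : 'I_t,
          [/\ is_circulant (block_of V i j),
              no_2x2_ones (block_of V i j) &
              row_weight (block_of V i j) (w ((j + t - i) %% t))]) &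
      weight_mx V = circ_mx t w].
Proof.
move=> hS hc hl hd hv V w; subst v.
case: hS => hT hL hB hx hxy.
have hr : regular_pts sigma by case: hc.
have ho : #[sigma]%g = t * d by rewrite (order_reg P0 hr) hT.
have hV : no_2x2_ones V.
  move=> [r1 [r2 [c1 [c2 [hr12 hc12 /andP [h11 h12] /andP [h21 h22]]]]]].
  rewrite !mxE in h11 h12 h21 h22.
  have hb : blk sigma l0 (r1 %/ d + r1 %% d * t) != blk sigma l0 (r2 %/ d + r2 %% d * t).
    apply: contra hr12 => /eqP /(blk_eq hc hl); rewrite ho => /rexp_inj -> //.
  have hp : pt sigma P0 (c1 %/ d + c1 %% d * t) != pt sigma P0 (c2 %/ d + c2 %% d * t).
    apply: contra hc12 => /eqP /(pt_eq hr); rewrite ho => /rexp_inj -> //.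
  have h1 := hxy _ _ hp.
  have : [set blk sigma l0 (r1 %/ d + r1 %% d * t); blk sigma l0 (r2 %/ d + r2 %% d * t)]
     \subset [set B in L | (pt sigma P0 (c1 %/ d + c1 %% d * t) \in B) &&
                           (pt sigma P0 (c2 %/ d + c2 %% d * t) \in B)].
    apply/subsetP => B; rewrite !inE => /orP [/eqP -> | /eqP ->];
      by rewrite blk_in //= ?h11 ?h12 ?h21 ?h22; case: hc.
  move/subset_leq_card; rewrite cards2 hb => h2.
  by have := leq_trans h2 h1.
have hcirc : forall i j : 'I_t, is_circulant (block_of V i j).
  move=> i j a b ha; rewrite !entryE; apply: mem_congr; rewrite ho /= (modn_small ha).
  rewrite (mulnC t d) muln_modl -modnDml modnDmr modnDml.
  congr (_ %% _); nia.
have hrow : forall i j : 'I_t, row_weight (block_of V i j) (w ((j + t - i) %% t)).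
  move=> i j a.
  have ht : 0 < t := leq_ltn_trans (leq0n i) (ltn_ord i).
  set c := (j + t - i) %% t.
  have hct : c < t by rewrite ltn_pmod.
  rewrite /w /wt orbit_count // modn_mod -(count_orbit _ _ hct) //.
  transitivity #|[set b : 'I_d | (fun m => pt sigma P0 m \in l0)
                   (c + (b + (d - 1 - a + (j + t - i) %/ t)) * t)]|.
    apply: eq_card => b; rewrite !inE entryE /=.
    rewrite -[in RHS](blk0 sigma l0); apply: mem_congr; rewrite ho.
    have e : c + (b + (d - 1 - a + (j + t - i) %/ t)) * t + (i + a * t) = j + b * t + 0 + t * d.
      have := divn_eq (j + t - i) t; rewrite -/c.
      have := ltn_ord i; have := ltn_ord a; nia.
    by rewrite e modnDr.
  apply: (@count_rot d t c (d - 1 - a + (j + t - i) %/ t) (fun m => pt sigma P0 m \in l0)) => // m; by rewrite [in LHS]pt_mod ho.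
split => //.
- move=> i j; split => //.
  move=> [a1 [a2 [b1 [b2 [ha hb h1 h2]]]]]; apply: hV.
  exists (blk_idx i a1), (blk_idx i a2), (blk_idx j b1), (blk_idx j b2).
  split; last 2 first.
  + by move: h1; rewrite /block_of !mxE.
  + by move: h2; rewrite /block_of !mxE.
  + apply: contra ha => /eqP /(congr1 val) /= /addnI e; apply/eqP; exact: val_inj.
  + apply: contra hb => /eqP /(congr1 val) /= /addnI e; apply/eqP; exact: val_inj.
- apply/matrixP => i j; rewrite !mxE.
  have e : #|[set ab : 'I_d * 'I_d | block_of V i j ab.1 ab.2]| = d * w ((j + t - i) %% t).
    rewrite card_as_sum -(pair_bigA _ (fun a b : 'I_d => nat_of_bool (block_of V i j a b))) /=.
    transitivity (\sum_(a < d) w ((j + t - i) %% t)).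
      apply: eq_bigr => a _; rewrite -(hrow i j a) card_as_sum //.
    by rewrite sum_nat_const card_ord.
  by rewrite e mulKn.
Qed.

Theorem corollary1 (T : finType) (L : {set {set T}}) (v k : nat)
    (sigma : {perm T}) (P0 : T) (l0 : {set T}) (d : nat) :
  sym_config L v k ->
  cyclic_perm L sigma ->
  l0 \in L ->
  0 < d -> d %| v ->
  let t := v %/ d in
  let V := ordered_incidence sigma P0 l0 t d in
  let w := wt sigma P0 l0 v t in
  [/\ no_2x2_ones V,
      block_circulant V,
      (forall i j : 'I_t,
          [/\ is_circulant (block_of V i j),
              no_2x2_ones (block_of V i j) &
              row_weight (block_of V i j) (w ((j + t - i) %% t))]) &
      weight_mx V = circ_mx t w].
Proof.
move=> hS hc hl hd hdv.
have hv : v = v %/ d * d by rewrite divnK.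
exact (@main_lemma T L v k sigma P0 l0 (v %/ d) d hS hc hl hd hv).
Qed.
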